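(* For any alphabet $\Sigma$, the category of (nondeterministic) automata on $\Sigma$ is a quasitopos.
   Context: An automaton on an alphabet $\Sigma$ is a set $X$ together with a function $\delta:\Sigma\times X\to 2^X$. A morphism from $\delta:\Sigma\times X\to 2^X$ to $\delta':\Sigma\times X'\to 2^{X'}$ is a function $f:X\to X'$ such that $f(\delta(\alpha,x))\subseteq\delta'(\alpha,f(x))$ for all $\alpha\in\Sigma$, $x\in X$. *)

(* Defs.v *)
From Stdlib Require Import ProofIrrelevance.

Set Implicit Arguments.

Record Category := {
  Ob :> Type;
  Hom : Ob -> Ob -> Type;
  idm : forall A, Hom A A;
  comp : forall A B C, Hom B C -> Hom A B -> Hom A C;
  comp_id_l : forall A B (f : Hom A B), comp (idm B) f = f;
  comp_id_r : forall A B (f : Hom A B), comp f (idm A) = f;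
  comp_assoc : forall A B C D (h : Hom C D) (g : Hom B C) (f : Hom A B),
      comp h (comp g f) = comp (comp h g) f
}.

Arguments Hom {c} _ _.
Arguments idm {c} _.
Arguments comp {c A B C} _ _.

Section CatNotions.
Variable C : Category.

Definition mono {A B : C} (m : Hom A B) : Prop :=
  forall Z (g h : Hom Z A), comp m g = comp m h -> g = h.

Definition epi {A B : C} (e : Hom A B) : Prop :=
  forall Z (g h : Hom B Z), comp g e = comp h e -> g = h.

Definition strong_mono {S D : C} (m : Hom S D) : Prop :=
  mono m /\
  forall (A B : C) (e : Hom A B) (u : Hom A S) (v : Hom B D),
    epi e -> comp v e = comp m u ->
    exists! d : Hom B S, comp d e = u /\ comp m d = v.

Definition is_terminal (T : C) : Prop := forall X : C, exists! f : Hom X T, True.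
Definition is_initial (I : C) : Prop := forall X : C, exists! f : Hom I X, True.

Definition is_pullback {A B Z P : C} (f : Hom A Z) (g : Hom B Z)
  (p1 : Hom P A) (p2 : Hom P B) : Prop :=
  comp f p1 = comp g p2 /\
  forall (Q : C) (q1 : Hom Q A) (q2 : Hom Q B), comp f q1 = comp g q2 ->
    exists! u : Hom Q P, comp p1 u = q1 /\ comp p2 u = q2.

Definition is_pushout {Z A B P : C} (f : Hom Z A) (g : Hom Z B)
  (i1 : Hom A P) (i2 : Hom B P) : Prop :=
  comp i1 f = comp i2 g /\
  forall (Q : C) (q1 : Hom A Q) (q2 : Hom B Q), comp q1 f = comp q2 g ->
    exists! u : Hom P Q, comp u i1 = q1 /\ comp u i2 = q2.

Definition is_product {A B P : C} (p1 : Hom P A) (p2 : Hom P B) : Prop :=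
  forall (Q : C) (q1 : Hom Q A) (q2 : Hom Q B),
    exists! u : Hom Q P, comp p1 u = q1 /\ comp p2 u = q2.

Definition finitely_complete : Prop :=
  (exists T : C, is_terminal T) /\
  forall (A B Z : C) (f : Hom A Z) (g : Hom B Z),
    exists (P : C) (p1 : Hom P A) (p2 : Hom P B), is_pullback f g p1 p2.

Definition finitely_cocomplete : Prop :=
  (exists I : C, is_initial I) /\
  forall (Z A B : C) (f : Hom Z A) (g : Hom Z B),
    exists (P : C) (i1 : Hom A P) (i2 : Hom B P), is_pushout f g i1 i2.

Definition has_binary_products : Prop :=
  forall A B : C, exists (P : C) (p1 : Hom P A) (p2 : Hom P B), is_product p1 p2.

(** exponential B^A : an object E, a product P = E x A and ev : P -> B
    such that every f : Z x A -> B factors as ev o (g x id_A) for a unique g *)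
Definition is_exponential (A B E : C) : Prop :=
  exists (P : C) (p1 : Hom P E) (p2 : Hom P A) (ev : Hom P B),
    is_product p1 p2 /\
    forall (Z ZA : C) (q1 : Hom ZA Z) (q2 : Hom ZA A) (f : Hom ZA B),
      is_product q1 q2 ->
      exists! g : Hom Z E,
        exists h : Hom ZA P,
          comp p1 h = comp g q1 /\ comp p2 h = q2 /\ comp ev h = f.

Definition cartesian_closed : Prop :=
  (exists T : C, is_terminal T) /\ has_binary_products /\
  forall A B : C, exists E : C, is_exponential A B E.

Definition has_strong_subobject_classifier : Prop :=
  exists (One Omega : C) (tru : Hom One Omega),
    is_terminal One /\
    forall (S D : C) (m : Hom S D), strong_mono m ->
      exists! chi : Hom D Omega,
        exists t : Hom S One, is_pullback chi tru m t.

End CatNotions.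

Section Slice.
Variables (C : Category) (A : C).

Definition slice_ob := { X : C & Hom X A }.
Definition slice_hom (x y : slice_ob) :=
  { h : Hom (projT1 x) (projT1 y) | comp (projT2 y) h = projT2 x }.

Definition slice_id (x : slice_ob) : slice_hom x x :=
  exist _ (idm (projT1 x)) (comp_id_r C _ _ (projT2 x)).

Definition slice_comp (x y z : slice_ob) (g : slice_hom y z) (f : slice_hom x y)
  : slice_hom x z.
Proof.
  exists (comp (proj1_sig g) (proj1_sig f)).
  rewrite comp_assoc, (proj2_sig g). exact (proj2_sig f).
Defined.

Lemma slice_hom_eq (x y : slice_ob) (f g : slice_hom x y) :
  proj1_sig f = proj1_sig g -> f = g.
Proof.
  destruct f as [f Hf], g as [g Hg]; simpl; intros ->.
  f_equal; apply proof_irrelevance.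
Qed.

Definition Slice : Category.
Proof.
  refine {| Ob := slice_ob; Hom := slice_hom; idm := slice_id;
            comp := slice_comp |}.
  - intros; apply slice_hom_eq; simpl; apply comp_id_l.
  - intros; apply slice_hom_eq; simpl; apply comp_id_r.
  - intros; apply slice_hom_eq; simpl; apply comp_assoc.
Defined.
End Slice.

Definition locally_cartesian_closed (C : Category) : Prop :=
  forall A : C, cartesian_closed (Slice C A).

Definition quasitopos (C : Category) : Prop :=
  finitely_complete C /\ finitely_cocomplete C /\
  locally_cartesian_closed C /\ has_strong_subobject_classifier C.

(** * Nondeterministic automata on an alphabet Sigma.
    An automaton is a set X with delta : Sigma x X -> 2^X; here 2^X is
    represented as X -> Prop, so [delta a x y] means y \in delta(a, x). *)
Record automaton (Sigma : Type) := {
  states : Type;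
  delta : Sigma -> states -> states -> Prop
}.

Definition aut_hom (Sigma : Type) (M N : automaton Sigma) :=
  { f : states M -> states N |
    forall (a : Sigma) (x y : states M), delta M a x y -> delta N a (f x) (f y) }.

Definition aut_id (Sigma : Type) (M : automaton Sigma) : aut_hom M M :=
  exist (fun f : states M -> states M =>
    forall a x y, delta M a x y -> delta M a (f x) (f y)) (fun x => x) (fun a x y H => H).

Definition aut_comp (Sigma : Type) (M N P : automaton Sigma)
  (g : aut_hom N P) (f : aut_hom M N) : aut_hom M P :=
  exist (fun h : states M -> states P =>
    forall a x y, delta M a x y -> delta P a (h x) (h y))
    (fun x => proj1_sig g (proj1_sig f x))
    (fun a x y H => proj2_sig g a _ _ (proj2_sig f a x y H)).

Lemma aut_hom_eq (Sigma : Type) (M N : automaton Sigma) (f g : aut_hom M N) :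
  proj1_sig f = proj1_sig g -> f = g.
Proof.
  destruct f as [f Hf], g as [g Hg]; simpl; intros ->.
  f_equal; apply proof_irrelevance.
Qed.

Definition AutCat (Sigma : Type) : Category.
Proof.
  refine {| Ob := automaton Sigma; Hom := @aut_hom Sigma;
            idm := @aut_id Sigma; comp := @aut_comp Sigma |};
  intros; apply aut_hom_eq; reflexivity.
Defined.

(* Main.v *)
Require Import Defs.
From Stdlib Require Import ProofIrrelevance FunctionalExtensionality PropExtensionality ClassicalEpsilon.
Set Implicit Arguments.

Lemma sig_ext (A : Type) (P : A -> Prop) (x y : sig P) :
  proj1_sig x = proj1_sig y -> x = y.
Proof. destruct x as [a pa], y as [b pb]; simpl; intros ->; f_equal; apply proof_irrelevance. Qed.

Lemma hom_ext (S : Type) (M N : automaton S) (f g : aut_hom M N) :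
  (forall x, proj1_sig f x = proj1_sig g x) -> f = g.
Proof. intros H; apply aut_hom_eq; apply functional_extensionality; exact H. Qed.

Lemma happ (S : Type) (M N : automaton S) (f g : aut_hom M N) :
  f = g -> forall x, proj1_sig f x = proj1_sig g x.
Proof. intros ->; reflexivity. Qed.

Definition mkhom (S : Type) (M N : automaton S) (f : states M -> states N)
  (H : forall a x y, delta M a x y -> delta N a (f x) (f y)) : aut_hom M N :=
  exist _ f H.
Arguments mkhom {S} M N f H.

Definition termA S : automaton S := {| states := unit; delta := fun _ _ _ => True |}.

Lemma term_is S : is_terminal (AutCat S) (termA S).
Proof.
  intros X. exists (mkhom X (termA S) (fun _ => tt) (fun _ _ _ _ => I)).
  split; [exact I|]. intros g _. apply hom_ext. intros x; simpl.
  match goal with |- _ = ?t => destruct t end; reflexivity.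
Qed.

Definition pbA S (A B Z : automaton S) (f : aut_hom A Z) (g : aut_hom B Z) : automaton S :=
 {| states := { ab : states A * states B | proj1_sig f (fst ab) = proj1_sig g (snd ab) };
    delta := fun a u v => delta A a (fst (proj1_sig u)) (fst (proj1_sig v)) /\
                          delta B a (snd (proj1_sig u)) (snd (proj1_sig v)) |}.

Definition pb1 S (A B Z : automaton S) (f : aut_hom A Z) (g : aut_hom B Z) : aut_hom (pbA f g) A :=
  mkhom (pbA f g) A (fun u => fst (proj1_sig u)) (fun a u v H => proj1 H).
Definition pb2 S (A B Z : automaton S) (f : aut_hom A Z) (g : aut_hom B Z) : aut_hom (pbA f g) B :=
  mkhom (pbA f g) B (fun u => snd (proj1_sig u)) (fun a u v H => proj2 H).

Definition pb_pair S (A B Z Q : automaton S) (f : aut_hom A Z) (g : aut_hom B Z)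
  (q1 : aut_hom Q A) (q2 : aut_hom Q B)
  (E : forall w, proj1_sig f (proj1_sig q1 w) = proj1_sig g (proj1_sig q2 w)) : aut_hom Q (pbA f g) :=
  mkhom Q (pbA f g) (fun w => exist _ (proj1_sig q1 w, proj1_sig q2 w) (E w))
    (fun a x y H => conj (proj2_sig q1 a x y H) (proj2_sig q2 a x y H)).

Lemma pb_is S (A B Z : automaton S) (f : aut_hom A Z) (g : aut_hom B Z) :
  is_pullback (AutCat S) f g (pb1 f g) (pb2 f g).
Proof.
  split.
  - apply hom_ext; intros [[x y] e]; simpl; exact e.
  - intros Q q1 q2 E. pose proof (happ E) as E'; simpl in E'.
    exists (pb_pair f g q1 q2 E'). split; [split; apply hom_ext; reflexivity|].
    intros u' [H1 H2]. apply hom_ext; intros w. apply sig_ext. simpl.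
    pose proof (happ H1 w) as e1; pose proof (happ H2 w) as e2; simpl in e1, e2.
    rewrite <- e1, <- e2; symmetry; apply surjective_pairing.
Qed.

Lemma fin_complete S : finitely_complete (AutCat S).
Proof.
  split. - exists (termA S); apply term_is.
  - intros A B Z f g. exists (pbA f g), (pb1 f g), (pb2 f g). apply pb_is.
Qed.

Definition initA S : automaton S := {| states := Empty_set; delta := fun _ _ _ => False |}.

Lemma init_is S : is_initial (AutCat S) (initA S).
Proof.
  intros X. exists (mkhom (initA S) X (fun e => match e with end) (fun _ e _ H => match H with end)).
  split; [exact I|]. intros g _. apply hom_ext. intros [].
Qed.

Definition sumR S (A B : automaton S) (a : S) (s t : states A + states B) : Prop :=
  match s, t with
  | inl x, inl y => delta A a x y
  | inr x, inr y => delta B a x y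
  | _, _ => False
  end.

Definition EQ (X : Type) (G : X -> X -> Prop) (s t : X) : Prop :=
  forall E : X -> X -> Prop, (forall x, E x x) -> (forall x y, E x y -> E y x) ->
    (forall x y z, E x y -> E y z -> E x z) -> (forall x y, G x y -> E x y) -> E s t.

Lemma EQ_refl X G x : @EQ X G x x.
Proof. intros E r _ _ _; apply r. Qed.
Lemma EQ_sym X G x y : @EQ X G x y -> EQ G y x.
Proof. intros H E r s t g; apply s, H; auto. Qed.
Lemma EQ_trans X G x y z : @EQ X G x y -> EQ G y z -> EQ G x z.
Proof. intros H1 H2 E r s t g; apply (t _ y); [apply H1|apply H2]; auto. Qed.
Lemma EQ_gen X (G : X -> X -> Prop) x y : G x y -> EQ G x y.
Proof. intros H E r s t g; apply g, H. Qed.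

Definition quot X (G : X -> X -> Prop) := { P : X -> Prop | exists x, P = EQ G x }.
Definition cls X (G : X -> X -> Prop) (x : X) : quot G := exist _ (EQ G x) (ex_intro _ x eq_refl).

Lemma cls_eq X (G : X -> X -> Prop) x y : cls G x = cls G y <-> EQ G x y.
Proof.
  split.
  - intros H. apply (f_equal (@proj1_sig _ _)) in H. simpl in H.
    rewrite H. apply EQ_refl.
  - intros H. apply sig_ext; simpl. apply functional_extensionality; intros z.
    apply propositional_extensionality; split; intros K.
    + eapply EQ_trans; [apply EQ_sym, H|exact K].
    + eapply EQ_trans; [exact H|exact K].
Qed.

Definition rep X (G : X -> X -> Prop) (c : quot G) : X :=
  proj1_sig (constructive_indefinite_description _ (proj2_sig c)).

Lemma rep_spec X (G : X -> X -> Prop) (c : quot G) : cls G (rep c) = c.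
Proof.
  unfold rep. destruct (constructive_indefinite_description _ (proj2_sig c)) as [x Hx].
  simpl. apply sig_ext; simpl; symmetry; exact Hx.
Qed.

Lemma quot_lift X (G : X -> X -> Prop) (W : Type) (h : X -> W) :
  (forall x y, G x y -> h x = h y) -> forall x y, EQ G x y -> h x = h y.
Proof.
  intros Hg x y H. apply (H (fun x y => h x = h y)); intros; try congruence; auto.
Qed.

Definition poG S (Z A B : automaton S) (f : aut_hom Z A) (g : aut_hom Z B)
  (s t : states A + states B) : Prop :=
  exists z, s = inl (proj1_sig f z) /\ t = inr (proj1_sig g z).

Definition poA S (Z A B : automaton S) (f : aut_hom Z A) (g : aut_hom Z B) : automaton S :=
  {| states := quot (poG f g);
     delta := fun a c d => exists s t, c = cls (poG f g) s /\ d = cls (poG f g) t /\ sumR A B a s t |}.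

Definition po1 S (Z A B : automaton S) (f : aut_hom Z A) (g : aut_hom Z B) : aut_hom A (poA f g) :=
  mkhom A (poA f g) (fun x => cls (poG f g) (inl x))
   (fun a x y H => ex_intro _ (inl x) (ex_intro _ (inl y) (conj eq_refl (conj eq_refl H)))).
Definition po2 S (Z A B : automaton S) (f : aut_hom Z A) (g : aut_hom Z B) : aut_hom B (poA f g) :=
  mkhom B (poA f g) (fun x => cls (poG f g) (inr x))
   (fun a x y H => ex_intro _ (inr x) (ex_intro _ (inr y) (conj eq_refl (conj eq_refl H)))).

Definition sumcase S (A B W : automaton S) (q1 : aut_hom A W) (q2 : aut_hom B W)
  (s : states A + states B) : states W :=
  match s with inl x => proj1_sig q1 x | inr y => proj1_sig q2 y end.

Lemma sumcase_hom S (A B W : automaton S) (q1 : aut_hom A W) (q2 : aut_hom B W) a s t :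
  sumR A B a s t -> delta W a (sumcase q1 q2 s) (sumcase q1 q2 t).
Proof.
  destruct s, t; simpl; try tauto; intros H; [apply (proj2_sig q1)|apply (proj2_sig q2)]; exact H.
Qed.

Lemma po_is S (Z A B : automaton S) (f : aut_hom Z A) (g : aut_hom Z B) :
  is_pushout (AutCat S) f g (po1 f g) (po2 f g).
Proof.
  split.
  - apply hom_ext; intros z; simpl. apply cls_eq, EQ_gen. exists z; split; reflexivity.
  - intros W q1 q2 E. pose proof (happ E) as E'; simpl in E'.
    assert (Hl : forall x y, EQ (poG f g) x y -> sumcase q1 q2 x = sumcase q1 q2 y).
    { apply quot_lift. intros x y [z [-> ->]]. simpl. apply E'. }
    assert (Hc : forall s, sumcase q1 q2 (rep (cls (poG f g) s)) = sumcase q1 q2 s).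
    { intros s. apply Hl. apply cls_eq. apply rep_spec. }
    unshelve eexists (mkhom (poA f g) W (fun c => sumcase q1 q2 (rep c)) _).
    { intros a c d [s [t [-> [-> H]]]]. rewrite !Hc. apply sumcase_hom, H. }
    split; [split; apply hom_ext; intros x; simpl; rewrite Hc; reflexivity|].
    intros u [H1 H2]. apply hom_ext; intros c. simpl.
    rewrite <- (rep_spec c) at 2. destruct (rep c) as [x|y]; simpl.
    + symmetry; apply (happ H1 x).
    + symmetry; apply (happ H2 y).
Qed.

Lemma fin_cocomplete S : finitely_cocomplete (AutCat S).
Proof.
  split. - exists (initA S); apply init_is.
  - intros Z A B f g. exists (poA f g), (po1 f g), (po2 f g). apply po_is.
Qed.

Definition OmegaA S : automaton S := {| states := bool; delta := fun _ _ _ => True |}.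
Definition truA S : aut_hom (termA S) (OmegaA S) :=
  mkhom (termA S) (OmegaA S) (fun _ => true) (fun _ _ _ _ => I).

Definition ptA S : automaton S := {| states := unit; delta := fun _ _ _ => False |}.

Lemma mono_inj S (X D : automaton S) (m : aut_hom X D) :
  mono (AutCat S) m -> forall x y, proj1_sig m x = proj1_sig m y -> x = y.
Proof.
  intros Hm x y E.
  pose (gx := mkhom (ptA S) X (fun _ => x) (fun _ _ _ H => match H with end)).
  pose (gy := mkhom (ptA S) X (fun _ => y) (fun _ _ _ H => match H with end)).
  assert (H : gx = gy). { apply Hm. apply hom_ext; intros []; exact E. }
  exact (happ H tt).
Qed.

Definition imA S (X D : automaton S) (m : aut_hom X D) : automaton S :=
  {| states := states X; delta := fun a x y => delta D a (proj1_sig m x) (proj1_sig m y) |}.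

Lemma strong_reflect S (X D : automaton S) (m : aut_hom X D) :
  strong_mono (AutCat S) m -> forall a x y, delta D a (proj1_sig m x) (proj1_sig m y) -> delta X a x y.
Proof.
  intros [Hm Hs] a x y H.
  pose (e := mkhom X (imA m) (fun x => x) (fun a x y H => proj2_sig m a x y H)).
  pose (v := mkhom (imA m) D (proj1_sig m) (fun a x y H => H)).
  destruct (Hs X (imA m) e (aut_id X) v) as [d [[Hd1 Hd2] _]].
  - intros Z g h E. apply hom_ext; intros w. exact (happ E w).
  - apply hom_ext; intros w; reflexivity.
  - pose proof (proj2_sig d a x y H) as K.
    pose proof (happ Hd1 x) as e1; pose proof (happ Hd1 y) as e2; simpl in e1, e2.
    rewrite <- e1, <- e2. exact K.
Qed.

Definition chiF S (X D : automaton S) (m : aut_hom X D) (d : states D) : bool :=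
  if excluded_middle_informative (exists x, proj1_sig m x = d) then true else false.

Lemma chiF_true S (X D : automaton S) (m : aut_hom X D) d :
  chiF m d = true <-> exists x, proj1_sig m x = d.
Proof.
  unfold chiF; destruct excluded_middle_informative; split; intros; auto; try discriminate; contradiction.
Qed.

Lemma bool_iff (b c : bool) : (b = true <-> c = true) -> b = c.
Proof. destruct b, c; intros [H1 H2]; auto; symmetry; auto. Qed.

Lemma classifier S : has_strong_subobject_classifier (AutCat S).
Proof.
  exists (termA S), (OmegaA S), (truA S). split; [apply term_is|].
  intros X D m Hsm.
  assert (Hinj := mono_inj (proj1 Hsm)).
  assert (Hrefl := strong_reflect Hsm).
  pose (chi := mkhom D (OmegaA S) (chiF m) (fun _ _ _ _ => I)).
  pose (t := mkhom X (termA S) (fun _ => tt) (fun _ _ _ _ => I)).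
  exists chi. split.
  - exists t. split.
    + apply hom_ext; intros x; simpl. apply chiF_true. exists x; reflexivity.
    + intros Q q1 q2 E. pose proof (happ E) as E'; simpl in E'.
      assert (Hex : forall w, exists x, proj1_sig m x = proj1_sig q1 w).
      { intros w. apply chiF_true, E'. }
      pose (uf := fun w => proj1_sig (constructive_indefinite_description _ (Hex w))).
      assert (Huf : forall w, proj1_sig m (uf w) = proj1_sig q1 w).
      { intros w; unfold uf; destruct constructive_indefinite_description; assumption. }
      unshelve eexists (mkhom Q X uf _).
      { intros a x y H. apply Hrefl. rewrite !Huf. apply (proj2_sig q1), H. }
      split; [split|].
      * apply hom_ext; intros w; apply Huf.
      * apply hom_ext; intros w; simpl. match goal with |- _ = ?t => destruct t end; reflexivity.
      * intros u' [H1 _]. apply hom_ext; intros w; simpl. apply Hinj.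
        rewrite Huf. symmetry. exact (happ H1 w).
  - intros chi' [t' [E' Hpb]]. apply hom_ext; intros d; unfold chi; simpl.
    assert (K : proj1_sig chi' d = true <-> exists x, proj1_sig m x = d).
    { split.
      - intros Hd.
        pose (q1 := mkhom (ptA S) D (fun _ => d) (fun _ _ _ H => match H with end)).
        pose (q2 := mkhom (ptA S) (termA S) (fun _ => tt) (fun _ _ _ H => match H with end)).
        destruct (Hpb (ptA S) q1 q2) as [u [[Hu1 _] _]].
        + apply hom_ext; intros []; simpl. exact Hd.
        + exists (proj1_sig u tt). exact (happ Hu1 tt).
      - intros [x <-]. pose proof (happ E' x) as K; simpl in K. exact K. }
    apply bool_iff. eapply iff_trans; [apply chiF_true|]. apply iff_sym; exact K.
Qed.

Definition sl S (A : automaton S) (x y : slice_ob (AutCat S) A) (f : slice_hom x y)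
  : states (projT1 x) -> states (projT1 y) := proj1_sig (proj1_sig f).
Definition ov S (A : automaton S) (x : slice_ob (AutCat S) A) : states (projT1 x) -> states A :=
  proj1_sig (projT2 x).

Lemma sl_over S (A : automaton S) (x y : slice_ob (AutCat S) A) (f : slice_hom x y) w :
  ov y (sl f w) = ov x w.
Proof. exact (happ (proj2_sig f) w). Qed.

Lemma sh_ext S (A : automaton S) (x y : slice_ob (AutCat S) A) (f g : slice_hom x y) :
  (forall w, sl f w = sl g w) -> f = g.
Proof. intros H; apply slice_hom_eq, hom_ext, H. Qed.

Lemma shapp S (A : automaton S) (x y : slice_ob (AutCat S) A) (f g : slice_hom x y) :
  f = g -> forall w, sl f w = sl g w.
Proof. intros ->; reflexivity. Qed.

Lemma sl_comp S (A : automaton S) (x y z : slice_ob (AutCat S) A) (g : slice_hom y z) (f : slice_hom x y) w :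
  sl (comp (c := Slice (AutCat S) A) g f) w = sl g (sl f w).
Proof. reflexivity. Qed.

Definition mksh S (A : automaton S) (x y : slice_ob (AutCat S) A) (h : aut_hom (projT1 x) (projT1 y))
  (H : forall w, proj1_sig (projT2 y) (proj1_sig h w) = proj1_sig (projT2 x) w) : slice_hom x y :=
  exist _ h (hom_ext (comp (projT2 y) h) (projT2 x) H).
Arguments mksh {S A} x y h H.

Lemma sl_mksh S (A : automaton S) (x y : slice_ob (AutCat S) A) h H w :
  sl (mksh x y h H) w = proj1_sig h w.
Proof. reflexivity. Qed.

Definition termS S (A : automaton S) : slice_ob (AutCat S) A := existT (fun X : AutCat S => Hom X A) A (aut_id A).

Lemma termS_is S (A : automaton S) : is_terminal (Slice (AutCat S) A) (termS A).
Proof.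
  intros x. exists (mksh x (termS A) (projT2 x) (fun w => eq_refl)).
  split; [exact I|]. intros g _. apply sh_ext; intros w.
  rewrite sl_mksh. pose proof (sl_over g w) as H. exact (eq_sym H).
Qed.

Definition pbS S (A : automaton S) (x y : slice_ob (AutCat S) A) : slice_ob (AutCat S) A :=
  existT (fun X : AutCat S => Hom X A) (pbA (projT2 x) (projT2 y)) (aut_comp (projT2 x) (pb1 (projT2 x) (projT2 y))).

Definition pS1 S (A : automaton S) (x y : slice_ob (AutCat S) A) : slice_hom (pbS x y) x :=
  mksh (pbS x y) x (pb1 (projT2 x) (projT2 y)) (fun w => eq_refl).
Definition pS2 S (A : automaton S) (x y : slice_ob (AutCat S) A) : slice_hom (pbS x y) y :=
  mksh (pbS x y) y (pb2 (projT2 x) (projT2 y)) (fun w => eq_sym (proj2_sig w)).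

Lemma pbS_is S (A : automaton S) (x y : slice_ob (AutCat S) A) :
  is_product (Slice (AutCat S) A) (pS1 x y) (pS2 x y).
Proof.
  intros Q q1 q2.
  assert (E : forall w, proj1_sig (projT2 x) (proj1_sig (proj1_sig q1) w)
                      = proj1_sig (projT2 y) (proj1_sig (proj1_sig q2) w)).
  { intros w. pose proof (sl_over q1 w); pose proof (sl_over q2 w).
    unfold ov, sl in *. congruence. }
  exists (mksh Q (pbS x y) (pb_pair (projT2 x) (projT2 y) (proj1_sig q1) (proj1_sig q2) E)
            (fun w => sl_over q1 w)).
  split; [split; apply sh_ext; reflexivity|].
  intros u [H1 H2]. apply sh_ext; intros w. apply sig_ext. simpl.
  pose proof (shapp H1 w) as e1; pose proof (shapp H2 w) as e2.
  rewrite sl_comp in e1, e2. unfold sl in *. simpl in e1, e2.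
  rewrite <- e1, <- e2; symmetry; apply surjective_pairing.
Qed.

Definition Eprop S (A : automaton S) (x y : slice_ob (AutCat S) A)
  (aF : states A * (states (projT1 x) -> states (projT1 y) -> Prop)) : Prop :=
  (forall u v, snd aF u v -> ov x u = fst aF /\ ov y v = fst aF) /\
  (forall u, ov x u = fst aF -> exists! v, snd aF u v).

Definition EA S (A : automaton S) (x y : slice_ob (AutCat S) A) : automaton S :=
  {| states := sig (Eprop x y);
     delta := fun s e e' => delta A s (fst (proj1_sig e)) (fst (proj1_sig e')) /\
        forall u u' v v', snd (proj1_sig e) u v -> snd (proj1_sig e') u' v' ->
           delta (projT1 x) s u u' -> delta (projT1 y) s v v' |}.

Definition er S (A : automaton S) (x y : slice_ob (AutCat S) A) : aut_hom (EA x y) A :=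
  mkhom (EA x y) A (fun e => fst (proj1_sig e)) (fun s e e' H => proj1 H).

Definition ES S (A : automaton S) (x y : slice_ob (AutCat S) A) : slice_ob (AutCat S) A :=
  existT (fun X : AutCat S => Hom X A) (EA x y) (er x y).

Lemma ev_ex S (A : automaton S) (x y : slice_ob (AutCat S) A) (w : states (projT1 (pbS (ES x y) x))) :
  exists v, snd (proj1_sig (fst (proj1_sig w))) (snd (proj1_sig w)) v.
Proof.
  destruct w as [[e u] H]; simpl in *.
  destruct (proj2 (proj2_sig e) u (eq_sym H)) as [v [Hv _]]. exists v; exact Hv.
Qed.

Definition evf S (A : automaton S) (x y : slice_ob (AutCat S) A) (w : states (projT1 (pbS (ES x y) x))) :
  states (projT1 y) := proj1_sig (constructive_indefinite_description _ (ev_ex w)).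

Lemma evf_spec S (A : automaton S) (x y : slice_ob (AutCat S) A) w :
  snd (proj1_sig (fst (proj1_sig w))) (snd (proj1_sig w)) (@evf S A x y w).
Proof. unfold evf; destruct constructive_indefinite_description; assumption. Qed.

Definition evh S (A : automaton S) (x y : slice_ob (AutCat S) A) :
  aut_hom (projT1 (pbS (ES x y) x)) (projT1 y).
Proof.
  refine (mkhom (projT1 (pbS (ES x y) x)) (projT1 y) (@evf S A x y) _).
  intros s w w' [H1 H2]. apply (proj2 H1) with (snd (proj1_sig w)) (snd (proj1_sig w')); auto using evf_spec.
Defined.

Definition evS S (A : automaton S) (x y : slice_ob (AutCat S) A) :
  slice_hom (pbS (ES x y) x) y.
Proof.
  refine (mksh (pbS (ES x y) x) y (evh x y) _).
  intros w. simpl. pose proof (proj1 (proj2_sig (fst (proj1_sig w))) _ _ (evf_spec w)) as [_ K].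
  exact K.
Defined.

Definition pbpt S (A : automaton S) (x y : slice_ob (AutCat S) A) (a : states (projT1 x)) (b : states (projT1 y))
  (H : ov x a = ov y b) : states (projT1 (pbS x y)) := exist _ (a, b) H.
Arguments pbpt {S A} x y a b H.

Definition GF S (A : automaton S) (x y Z ZA : slice_ob (AutCat S) A) (f : slice_hom ZA y)
  (k : slice_hom (pbS Z x) ZA) (z : states (projT1 Z)) : states (projT1 x) -> states (projT1 y) -> Prop :=
  fun u v => exists H : ov Z z = ov x u, v = sl f (sl k (pbpt Z x z u H)).
Arguments GF {S A} x y {Z ZA} f k z.

Lemma GF_prop S (A : automaton S) (x y Z ZA : slice_ob (AutCat S) A) (q1 : slice_hom ZA Z) (f : slice_hom ZA y)
  (k : slice_hom (pbS Z x) ZA) (Hk1 : comp (c := Slice (AutCat S) A) q1 k = pS1 Z x) z :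
  Eprop x y (ov Z z, GF x y f k z).
Proof.
  split; simpl.
  - intros u v [H ->]. split; [exact (eq_sym H)|].
    rewrite sl_over. rewrite <- (sl_over q1). pose proof (shapp Hk1 (pbpt Z x z u H)) as K.
    rewrite sl_comp in K. rewrite K. reflexivity.
  - intros u Hu. exists (sl f (sl k (pbpt Z x z u (eq_sym Hu)))). split.
    + exists (eq_sym Hu); reflexivity.
    + intros v' [H' ->]. rewrite (proof_irrelevance _ H' (eq_sym Hu)). reflexivity.
Qed.
Arguments GF_prop {S A} x y {Z ZA} q1 f k Hk1 z.

Definition Gh S (A : automaton S) (x y Z ZA : slice_ob (AutCat S) A) (q1 : slice_hom ZA Z) (f : slice_hom ZA y)
  (k : slice_hom (pbS Z x) ZA) (Hk1 : comp (c := Slice (AutCat S) A) q1 k = pS1 Z x) :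
  aut_hom (projT1 Z) (EA x y).
Proof.
  refine (mkhom (projT1 Z) (EA x y) (fun z => exist _ (ov Z z, GF x y f k z) (GF_prop x y q1 f k Hk1 z)) _).
  intros s z z' Hz. simpl. split.
  - exact (proj2_sig (projT2 Z) s z z' Hz).
  - intros u u' v v' [H ->] [H' ->] Hu.
    apply (proj2_sig (proj1_sig f)). apply (proj2_sig (proj1_sig k)). simpl. split; assumption.
Defined.
Arguments Gh {S A} x y {Z ZA} q1 f k Hk1.

Definition GS S (A : automaton S) (x y Z ZA : slice_ob (AutCat S) A) (q1 : slice_hom ZA Z) (f : slice_hom ZA y)
  (k : slice_hom (pbS Z x) ZA) (Hk1 : comp (c := Slice (AutCat S) A) q1 k = pS1 Z x) :
  slice_hom Z (ES x y) := mksh Z (ES x y) (Gh x y q1 f k Hk1) (fun z => eq_refl).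
Arguments GS {S A} x y {Z ZA} q1 f k Hk1.

Lemma evf_spec2 S (A : automaton S) (x y : slice_ob (AutCat S) A) (v : states (projT1 (pbS (ES x y) x))) e u :
  fst (proj1_sig v) = e -> snd (proj1_sig v) = u -> snd (proj1_sig e) u (evf v).
Proof. intros <- <-; apply evf_spec. Qed.

Lemma expS_is S (A : automaton S) (x y : slice_ob (AutCat S) A) :
  is_exponential (Slice (AutCat S) A) x y (ES x y).
Proof.
  exists (pbS (ES x y) x), (pS1 (ES x y) x), (pS2 (ES x y) x), (evS x y).
  split; [apply pbS_is|].
  intros Z ZA q1 q2 f Hprod.
  destruct (Hprod (pbS Z x) (pS1 Z x) (pS2 Z x)) as [k [[Hk1 Hk2] _]].
  destruct (@pbS_is S A Z x ZA q1 q2) as [mm [[Hm1 Hm2] _]].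
  assert (Hkm : forall w, sl k (sl mm w) = w).
  { destruct (Hprod ZA q1 q2) as [u0 [_ Hu]].
    assert (E1 : u0 = comp (c := Slice (AutCat S) A) k mm).
    { apply Hu. split; apply sh_ext; intros w; rewrite !sl_comp.
      - pose proof (shapp Hk1 (sl mm w)) as K; rewrite sl_comp in K; rewrite K.
        pose proof (shapp Hm1 w) as K'; rewrite sl_comp in K'; exact K'.
      - pose proof (shapp Hk2 (sl mm w)) as K; rewrite sl_comp in K; rewrite K.
        pose proof (shapp Hm2 w) as K'; rewrite sl_comp in K'; exact K'. }
    assert (E2 : u0 = idm ZA).
    { apply Hu; split; apply (comp_id_r (Slice (AutCat S) A)). }
    intros w. pose proof (shapp (eq_trans (eq_sym E1) E2) w) as H. rewrite sl_comp in H. exact H. }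
  assert (Hk1' : forall z u H, sl q1 (sl k (pbpt Z x z u H)) = z).
  { intros z u H. pose proof (shapp Hk1 (pbpt Z x z u H)) as K; rewrite sl_comp in K; exact K. }
  assert (Hk2' : forall z u H, sl q2 (sl k (pbpt Z x z u H)) = u).
  { intros z u H. pose proof (shapp Hk2 (pbpt Z x z u H)) as K; rewrite sl_comp in K; exact K. }
  exists (GS x y q1 f k Hk1). split.
  - destruct (@pbS_is S A (ES x y) x ZA (comp (c := Slice (AutCat S) A) (GS x y q1 f k Hk1) q1) q2)
      as [h [[Hh1 Hh2] _]].
    exists h. split; [exact Hh1|split; [exact Hh2|]].
    apply sh_ext; intros w. rewrite sl_comp.
    assert (K : snd (proj1_sig (sl (GS x y q1 f k Hk1) (sl q1 w))) (sl q2 w) (evf (sl h w))).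
    { apply evf_spec2; [exact (shapp Hh1 w)|exact (shapp Hh2 w)]. }
    change (GF x y f k (sl q1 w) (sl q2 w) (evf (sl h w))) in K.
    destruct K as [H K]. change (evf (sl h w) = sl f w). rewrite K.
    f_equal. etransitivity; [|apply Hkm]. f_equal. apply sig_ext. simpl.
    pose proof (shapp Hm1 w) as e1; pose proof (shapp Hm2 w) as e2.
    rewrite sl_comp in e1, e2. unfold sl in e1, e2 |- *. simpl in e1, e2.
    etransitivity; [|symmetry; apply surjective_pairing]. f_equal; [exact (eq_sym e1)|exact (eq_sym e2)].
  - intros g' [h' [Hh1 [Hh2 Hev]]]. apply sh_ext; intros z. apply sig_ext.
    assert (Key : forall u (H : ov Z z = ov x u),
               snd (proj1_sig (sl g' z)) u (sl f (sl k (pbpt Z x z u H)))).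
    { intros u H. set (t := sl k (pbpt Z x z u H)).
      pose proof (shapp Hev t) as Ev. rewrite sl_comp in Ev. rewrite <- Ev.
      apply evf_spec2.
      - pose proof (shapp Hh1 t) as K. rewrite !sl_comp in K. etransitivity; [exact K|]. f_equal. apply Hk1'.
      - pose proof (shapp Hh2 t) as K. rewrite !sl_comp in K. etransitivity; [exact K|]. apply Hk2'. }
    assert (Ov : fst (proj1_sig (sl g' z)) = ov Z z) by exact (sl_over g' z).
    revert Key Ov. destruct (sl g' z) as [[a F'] [HF1 HF2]]. simpl. intros Key Ov. subst a.
    f_equal. apply functional_extensionality; intros u. apply functional_extensionality; intros v.
    apply propositional_extensionality. split.
    + intros [H ->]. apply Key.
    + intros HF. destruct (HF1 u v HF) as [Hu _]. simpl in Hu.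
      exists (eq_sym Hu). destruct (HF2 u Hu) as [v0 [_ Huq]].
      rewrite <- (Huq _ HF). apply Huq. apply Key.
Qed.

Lemma lcc S : locally_cartesian_closed (AutCat S).
Proof.
  intros A. split; [|split].
  - exists (termS A); apply termS_is.
  - intros x y. exists (pbS x y), (pS1 x y), (pS2 x y). apply pbS_is.
  - intros x y. exists (ES x y). apply expS_is.
Qed.

Theorem corollary1 (Sigma : Type) : quasitopos (AutCat Sigma).
Proof.
  split; [apply fin_complete|split; [apply fin_cocomplete|split; [apply lcc|apply classifier]]].
Qed.
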